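(* Let $T$ be the monad on $\mathsf{Set}$ associated to a Mal'cev algebraic theory (so that $T$-algebras are the models of the theory). Then every $T$-algebra $(A,e)$ is indiscrete, and the partial evaluation relation on $TA$ is an equivalence relation.
   Context: A Mal'cev operation on a set $A$ is a ternary operation $m$ with $m(a,b,b)=a$ and $m(a,a,b)=b$ for all $a,b\in A$; a Mal'cev theory is an algebraic (Lawvere/equational) theory containing a ternary operation satisfying these identities. A $T$-algebra $(A,e)$ is indiscrete if for all $t_0,t_1\in TA$ with $e(t_0)=e(t_1)$ there is $\tau\in TTA$ with $\mu_A(\tau)=t_0$ and $(Te)(\tau)=t_1$ (i.e. the algebra square formed by $\mu_A,Te,e,e$ is a weak pullback). The partial evaluation relation on $TA$ consists of the pairs $(\mu_A(\tau),(Te)(\tau))$ for $\tau\in TTA$. *)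

(* Defs.v *)
From mathcomp Require Import all_boot.
Set Implicit Arguments. Unset Strict Implicit. Unset Printing Implicit Defensive.

(* A monad on Set (modelled by Type), given as a Kleisli-free triple
   (T, T on maps, unit, multiplication) together with the functor and monad laws,
   all stated pointwise. *)
Record monad := Monad {
  T : Type -> Type;
  fmap : forall A B : Type, (A -> B) -> T A -> T B;
  eta : forall A : Type, A -> T A;
  mu : forall A : Type, T (T A) -> T A;
  fmap_id : forall A (t : T A), fmap (fun x => x) t = t;
  fmap_comp : forall A B C (f : A -> B) (g : B -> C) (t : T A),
      fmap (fun x => g (f x)) t = fmap g (fmap f t);
  eta_nat : forall A B (f : A -> B) (a : A), fmap f (eta a) = eta (f a);
  mu_nat : forall A B (f : A -> B) (t : T (T A)),
      fmap f (mu t) = mu (fmap (fmap f) t);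
  mu_eta_l : forall A (t : T A), mu (eta t) = t;
  mu_eta_r : forall A (t : T A), mu (fmap (@eta A) t) = t;
  mu_assoc : forall A (t : T (T (T A))), mu (mu t) = mu (fmap (@mu A) t)
}.

Arguments fmap {m A B} f t.
Arguments eta {m A} a.
Arguments mu {m A} t.

Definition is_algebra (M : monad) (A : Type) (e : T M A -> A) : Prop :=
  (forall a : A, e (eta a) = a) /\
  (forall t : T M (T M A), e (mu t) = e (fmap e t)).

(* The monad is finitary (i.e. comes from an algebraic / Lawvere theory):
   every element of T A lies in the image of T applied to a map from a
   finite set.  For Set-functors this is equivalent to preserving filtered
   colimits. *)
Definition finitary (M : monad) : Prop :=
  forall (A : Type) (t : T M A),
    exists (n : nat) (f : 'I_n -> A) (s : T M 'I_n), fmap f s = t.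

(* Variable substitutions 3 -> 2 used for the Mal'cev identities:
   malcev_s1 : x0 |-> x0, x1 |-> x1, x2 |-> x1   (m(x,y,y))
   malcev_s2 : x0 |-> x0, x1 |-> x0, x2 |-> x1   (m(x,x,y)) *)
Definition malcev_s1 (i : 'I_3) : 'I_2 := inord (if val i == 0 then 0 else 1).
Definition malcev_s2 (i : 'I_3) : 'I_2 := inord (if val i == 2 then 1 else 0).

(* The theory has a (derived) ternary Mal'cev operation: a ternary term
   p in T 3 with p(x,y,y) = x and p(x,x,y) = y in T 2. *)
Definition malcev_theory (M : monad) : Prop :=
  exists p : T M 'I_3,
    fmap malcev_s1 p = eta (inord 0 : 'I_2) /\
    fmap malcev_s2 p = eta (inord 1 : 'I_2).

Definition partial_eval (M : monad) (A : Type) (e : T M A -> A)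
    (t0 t1 : T M A) : Prop :=
  exists tau : T M (T M A), mu tau = t0 /\ fmap e tau = t1.

Definition indiscrete (M : monad) (A : Type) (e : T M A -> A) : Prop :=
  forall t0 t1 : T M A, e t0 = e t1 ->
    exists tau : T M (T M A), mu tau = t0 /\ fmap e tau = t1.

Definition equivalence_relation (X : Type) (R : X -> X -> Prop) : Prop :=
  (forall x, R x x) /\
  (forall x y, R x y -> R y x) /\
  (forall x y z, R x y -> R y z -> R x z).

(* Main.v *)
Require Import Defs.
From mathcomp Require Import all_boot.
From Stdlib Require Import FunctionalExtensionality.

Definition sel3 {X : Type} (x y z : X) (i : 'I_3) : X :=
  if nat_of_ord i == 0 then x else if nat_of_ord i == 1 then y else z.
Definition sel2 {X : Type} (x y : X) (j : 'I_2) : X :=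
  if nat_of_ord j == 0 then x else y.

Section S.
Variable M : monad.
Variable p : T M 'I_3.
Hypothesis H1 : fmap malcev_s1 p = eta (inord 0 : 'I_2).
Hypothesis H2 : fmap malcev_s2 p = eta (inord 1 : 'I_2).

Definition mm {X : Type} (x y z : T M X) : T M X := mu (fmap (sel3 x y z) p).

Lemma mm_xyy X (x y : T M X) : mm x y y = x.
Proof.
rewrite /mm.
have -> : sel3 x y y = (fun i => sel2 x y (malcev_s1 i)).
  apply: functional_extensionality => i.
  rewrite /sel3 /sel2 /malcev_s1.
  case: i => [[|[|[|k]]] Hk] //=; rewrite ?inordK //.
rewrite fmap_comp H1 eta_nat mu_eta_l /sel2. by rewrite inordK.
Qed.

Lemma mm_xxy X (x y : T M X) : mm x x y = y.
Proof.
rewrite /mm.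
have -> : sel3 x x y = (fun i => sel2 x y (malcev_s2 i)).
  apply: functional_extensionality => i.
  rewrite /sel3 /sel2 /malcev_s2.
  case: i => [[|[|[|k]]] Hk] //=; rewrite ?inordK //.
by rewrite fmap_comp H2 eta_nat mu_eta_l /sel2 inordK.
Qed.

Lemma mm_mu X (x y z : T M (T M X)) : mu (mm x y z) = mm (mu x) (mu y) (mu z).
Proof.
rewrite /mm mu_assoc -fmap_comp.
have -> : (fun i => mu (sel3 x y z i)) = sel3 (mu x) (mu y) (mu z).
  apply: functional_extensionality => i; rewrite /sel3.
  by case: ifP => //; case: ifP.
by [].
Qed.

Lemma mm_fmap X Y (f : X -> Y) (x y z : T M X) :
  fmap f (mm x y z) = mm (fmap f x) (fmap f y) (fmap f z).
Proof.
rewrite /mm mu_nat -fmap_comp.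
have -> : (fun i => fmap f (sel3 x y z i)) = sel3 (fmap f x) (fmap f y) (fmap f z).
  apply: functional_extensionality => i; rewrite /sel3.
  by case: ifP => //; case: ifP.
by [].
Qed.
End S.

Theorem corollary3p12 (M : monad) (Hfin : finitary M) (Hmal : malcev_theory M)
    (A : Type) (e : T M A -> A) (He : is_algebra e) :
  indiscrete e /\ equivalence_relation (partial_eval e).
Proof.
case: Hmal => p [H1 H2].
case: He => He1 He2.
have ind : indiscrete e.
  move=> t0 t1 E.
  exists (@mm M p _ (eta t0) (eta t1) (fmap (@eta M A) t1)); split.
    by rewrite mm_mu !mu_eta_l mu_eta_r mm_xyy.
  rewrite mm_fmap !eta_nat -fmap_comp E.
  have -> : (fun x => e (eta x)) = (fun x => x).
    by apply: functional_extensionality => x; rewrite He1.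
  by rewrite fmap_id mm_xxy.
have Req : forall t0 t1, partial_eval e t0 t1 -> e t0 = e t1.
  by move=> t0 t1 [tau [<- <-]]; rewrite He2.
split => //; split; [|split].
- move=> t; exists (fmap (@eta M A) t); split; first by rewrite mu_eta_r.
  rewrite -fmap_comp.
  have -> : (fun x => e (eta x)) = (fun x => x).
    by apply: functional_extensionality => x; rewrite He1.
  by rewrite fmap_id.
- by move=> x y /Req E; apply: ind.
- by move=> x y z /Req E1 /Req E2; apply: ind; rewrite E1.
Qed.
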